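(* Fix $c \in \mathbb{R}$ and $p \in (0,1)$. For $x^{\text{obs}} > c$ let $\theta(p)$ be the unique solution $\theta$ of $F(x^{\text{obs}};\theta,c) = p$, and let $\theta^*(p) = x^{\text{obs}} - \Phi^{-1}(p)$ (the unique solution of $\Phi(x^{\text{obs}} - \theta) = p$). Then $\theta(p) - \theta^*(p) \to 0$ as $x^{\text{obs}} \to \infty$.
   Context: Let $\Phi$ denote the standard normal distribution function. For $c \in \mathbb{R}$, $a \ge c$ and $\theta \in \mathbb{R}$ define $$F(a;\theta,c) = \frac{\Phi(a-\theta) - \Phi(c-\theta)}{1-\Phi(c-\theta)}.$$ It is known that for each fixed $x^{\text{obs}} > c$ the map $\theta \mapsto F(x^{\text{obs}};\theta,c)$ is continuous and strictly decreasing from $\mathbb{R}$ onto $(0,1)$, so $\theta(p)$ is well defined. *)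

(* Defs.v *)
From Stdlib Require Import Reals.
From Coquelicot Require Import Coquelicot.
Open Scope R_scope.

Definition std_normal_pdf (t : R) : R := exp (- t ^ 2 / 2) / sqrt (2 * PI).

Definition Phi (x : R) : R :=
  RInt_gen std_normal_pdf (Rbar_locally m_infty) (at_point x).

Definition F (a theta c : R) : R :=
  (Phi (a - theta) - Phi (c - theta)) / (1 - Phi (c - theta)).

(* Main.v *)
Require Import Defs.
From Stdlib Require Import Reals Lra.
From Coquelicot Require Import Coquelicot.
Open Scope R_scope.

Lemma exp_le' x y : x <= y -> exp x <= exp y.
Proof. intros [H|H]; [left; now apply exp_increasing | subst; lra]. Qed.

Lemma exd_cont (f : R -> R) x : ex_derive f x -> continuous f x.
Proof. intro H. exact (ex_derive_continuous (K:=R_AbsRing) (V:=R_NormedModule) f x H). Qed.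

Lemma exRc (f : R -> R) a b : (forall z, Rmin a b <= z <= Rmax a b -> continuous f z) -> ex_RInt f a b.
Proof. intro H. exact (ex_RInt_continuous (V:=R_CompleteNormedModule) f a b H). Qed.

Lemma RInt_scal_R (f : R -> R) a b l : ex_RInt f a b -> RInt (fun t => l * f t) a b = l * RInt f a b.
Proof. intro H. exact (RInt_scal (V:=R_CompleteNormedModule) f a b l H). Qed.

Lemma RInt_comp_lin_R (f : R -> R) u v a b : ex_RInt f (u*a+v) (u*b+v) ->
  RInt (fun y => u * f (u*y+v)) a b = RInt f (u*a+v) (u*b+v).
Proof. intro H. exact (RInt_comp_lin (V:=R_CompleteNormedModule) f u v a b H). Qed.

Lemma RInt_Chasles_R (f : R -> R) a b c : ex_RInt f a b -> ex_RInt f b c ->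
  RInt f a b + RInt f b c = RInt f a c.
Proof. intros H1 H2. exact (RInt_Chasles (V:=R_CompleteNormedModule) f a b c H1 H2). Qed.

Lemma RInt_ext_R (f g : R -> R) a b : (forall x, Rmin a b < x < Rmax a b -> f x = g x) ->
  RInt f a b = RInt g a b.
Proof. intro H. exact (RInt_ext (V:=R_CompleteNormedModule) f g a b H). Qed.

Definition ge (t : R) := exp (- t ^ 2 / 2).
Definition kk (x t : R) := exp (- (x ^ 2 * (1 + t ^ 2)) / 2) / (1 + t ^ 2).
Definition GG (x : R) := RInt ge 0 x.
Definition HH (x : R) := RInt (kk x) 0 1.

Lemma onept2 t : 0 < 1 + t ^ 2.
Proof. nra. Qed.

Lemma ge_cont t : continuous ge t.
Proof. apply exd_cont; unfold ge; auto_derive; auto. Qed.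

Lemma ge_exRInt a b : ex_RInt ge a b.
Proof. apply exRc; intros; apply ge_cont. Qed.

Lemma kk_cont x t : continuous (kk x) t.
Proof. apply exd_cont; unfold kk; auto_derive; pose proof (onept2 t); lra. Qed.

Lemma kk_exRInt x a b : ex_RInt (kk x) a b.
Proof. apply exRc; intros; apply kk_cont. Qed.

Lemma Derive_kk u t : Derive (fun z => kk z t) u = - u * exp (- (u ^ 2 * (1 + t ^ 2)) / 2).
Proof.
  apply is_derive_unique. unfold kk. pose proof (onept2 t).
  auto_derive; [lra|]. replace (- (u * (u * 1) * (1 + t * (t * 1))) * / 2) with (- (u ^ 2 * (1 + t ^ 2)) / 2) by field. field. lra.
Qed.


Lemma dHH (x : R) : is_derive HH x (- ge x * GG x).
Proof.
  unfold HH.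
  assert (E : - ge x * GG x = RInt (fun t => Derive (fun u => kk u t) x) 0 1).
  { rewrite (RInt_ext_R _ (fun t => (- ge x) * (x * (ge (x * t + 0))))).
    2:{ intros t _. rewrite Derive_kk.
        replace (- (x ^ 2 * (1 + t ^ 2)) / 2) with ((- x ^ 2 / 2) + (- (x * t + 0) ^ 2 / 2)) by field.
        rewrite exp_plus. unfold ge. ring. }
    rewrite RInt_scal_R.
    2:{ apply exRc. intros z _. apply exd_cont.
        unfold ge. auto_derive. auto. }
    rewrite RInt_comp_lin_R. 2: apply ge_exRInt.
    unfold GG. replace (x*0+0) with 0 by ring. replace (x*1+0) with x by ring. reflexivity. }
  rewrite E. apply is_derive_RInt_param.
  - apply filter_forall. intros y t _. unfold kk. auto_derive. pose proof (onept2 t); lra.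
  - intros t _. eapply continuity_2d_pt_ext.
    { intros u v. symmetry. apply Derive_kk. }
    apply continuity_2d_pt_mult.
    + apply continuity_2d_pt_opp, continuity_2d_pt_id1.
    + apply continuity_1d_2d_pt_comp. apply derivable_continuous_pt, derivable_pt_exp.
      apply continuity_2d_pt_mult. 2: apply continuity_2d_pt_const.
      apply continuity_2d_pt_opp. apply continuity_2d_pt_mult.
      * simpl. apply continuity_2d_pt_mult. apply continuity_2d_pt_id1.
        apply continuity_2d_pt_mult. apply continuity_2d_pt_id1. apply continuity_2d_pt_const.
      * apply continuity_2d_pt_plus. apply continuity_2d_pt_const.
        simpl. apply continuity_2d_pt_mult. apply continuity_2d_pt_id2.
        apply continuity_2d_pt_mult. apply continuity_2d_pt_id2. apply continuity_2d_pt_const.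
  - apply filter_forall. intros y. apply kk_exRInt.
Qed.

Lemma dGG (x : R) : is_derive GG x (ge x).
Proof.
  apply (is_derive_RInt (V:=R_NormedModule) ge GG 0 x).
  - apply filter_forall. intros y. apply (RInt_correct (V:=R_CompleteNormedModule)). apply ge_exRInt.
  - apply ge_cont.
Qed.

Definition KK (x : R) := GG x ^ 2 + 2 * HH x.

Lemma dKK (x : R) : is_derive KK x 0.
Proof.
  pose proof (is_derive_pow GG 2 x _ (dGG x)) as A.
  pose proof (is_derive_scal HH x 2 _ (dHH x)) as B.
  pose proof (is_derive_plus (K:=R_AbsRing) (V:=R_NormedModule) _ _ x _ _ A B) as C.
  replace 0 with (plus (INR 2 * ge x * GG x ^ Init.Nat.pred 2) (2 * (- ge x * GG x))).
  2:{ unfold plus; simpl; ring. }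
  exact C.
Qed.

Lemma HH0 : HH 0 = PI / 4.
Proof.
  unfold HH. rewrite (RInt_ext_R _ (fun t => / (1 + t ^ 2))).
  2:{ intros t _. unfold kk. replace (- (0 ^ 2 * (1 + t ^ 2)) / 2) with 0 by field.
      rewrite exp_0. unfold Rdiv. ring. }
  rewrite <- atan_1.
  replace (atan 1) with (atan 1 - atan 0) by (rewrite atan_0; ring).
  apply (is_RInt_unique (V:=R_CompleteNormedModule)).
  apply (is_RInt_derive (V:=R_CompleteNormedModule) atan).
  - intros t _. apply is_derive_Reals. apply derivable_pt_lim_atan.
  - intros t _. apply exd_cont. auto_derive. pose proof (onept2 t). simpl in *. lra.
Qed.

Lemma KK_const (x : R) : 0 <= x -> KK x = PI / 2.
Proof.
  intros [Hx|Hx].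
  - rewrite <- (eq_is_derive (V:=R_NormedModule) KK 0 x).
    + unfold KK, GG. rewrite RInt_point, HH0. unfold zero; simpl. field.
    + intros t _. apply dKK.
    + exact Hx.
  - subst. unfold KK, GG. rewrite RInt_point, HH0. unfold zero; simpl. field.
Qed.

Lemma ge_pos t : 0 < ge t.
Proof. apply exp_pos. Qed.

Lemma HH_bounds (x : R) : 0 <= HH x <= ge x.
Proof.
  split.
  - apply RInt_ge_0; [lra| apply kk_exRInt |]. intros t _. unfold kk.
    pose proof (onept2 t). pose proof (exp_pos (- (x ^ 2 * (1 + t ^ 2)) / 2)).
    apply Rlt_le, Rdiv_lt_0_compat; lra.
  - apply Rle_trans with (RInt (fun _ => ge x) 0 1).
    + apply RInt_le; [lra| apply kk_exRInt | apply exRc; intros; apply exd_cont; auto_derive; auto |].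
      intros t _. unfold kk.
      pose proof (onept2 t). pose proof (exp_pos (- (x ^ 2 * (1 + t ^ 2)) / 2)).
      assert (Hi : 0 < / (1 + t ^ 2) <= 1).
      { split. apply Rinv_0_lt_compat; lra. rewrite <- Rinv_1. apply Rinv_le_contravar; nra. }
      apply Rle_trans with (exp (- (x ^ 2 * (1 + t ^ 2)) / 2)).
      * unfold Rdiv at 2. nra.
      * unfold ge. apply exp_le'. assert (0 <= x^2 * t^2) by nra. nra.
    + rewrite (RInt_const (V:=R_CompleteNormedModule)). unfold scal; simpl; unfold mult; simpl. lra.
Qed.

Definition g0 (x : R) := RInt std_normal_pdf 0 x.

Lemma std_ge t : std_normal_pdf t = / sqrt (2 * PI) * ge t.
Proof. unfold std_normal_pdf, ge. unfold Rdiv. ring. Qed.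

Lemma sPI_pos : 0 < sqrt (2 * PI).
Proof. apply sqrt_lt_R0. pose proof PI2_1. lra. Qed.

Lemma g0_GG x : g0 x = / sqrt (2 * PI) * GG x.
Proof.
  unfold g0, GG. rewrite (RInt_ext_R _ (fun t => / sqrt (2 * PI) * ge t)).
  2:{ intros; apply std_ge. }
  apply RInt_scal_R. apply ge_exRInt.
Qed.

Lemma tail0 x : 0 <= x -> 0 <= 1/2 - g0 x <= ge x.
Proof.
  intros Hx. rewrite g0_GG.
  pose proof sPI_pos as Hs. set (s := sqrt (2 * PI)) in *.
  assert (Hss : s * s = 2 * PI) by (apply sqrt_sqrt; pose proof PI2_1; lra).
  pose proof (KK_const x Hx) as HK. unfold KK in HK.
  pose proof (HH_bounds x) as [H0 H1].
  assert (HG : 0 <= GG x).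
  { apply RInt_ge_0; [lra| apply ge_exRInt|]. intros; apply Rlt_le, ge_pos. }
  set (L := s / 2).
  assert (HL : L * L = PI / 2) by (unfold L; nra).
  assert (HLp : 0 < L) by (unfold L; lra).
  pose proof PI2_1.
  assert (HG2 : GG x * GG x = L * L - 2 * HH x) by (simpl in HK; nra).
  assert (HGL : GG x <= L) by nra.
  assert (Hm : (L - GG x) * L <= 2 * ge x) by nra.
  assert (Hm2 : L - GG x <= 2 * ge x * L).
  { apply Rmult_le_reg_r with L; [lra|]. pose proof (ge_pos x). nra. }
  assert (E : 1/2 - / s * GG x = (L - GG x) / s) by (unfold L; field; lra).
  rewrite E. split.
  - apply Rdiv_le_0_compat; lra.
  - apply Rmult_le_reg_r with s; [lra|]. unfold Rdiv. rewrite Rmult_assoc, Rinv_l by lra.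
    unfold L in *. nra.
Qed.

Lemma std_pos t : 0 < std_normal_pdf t.
Proof. rewrite std_ge. pose proof sPI_pos. pose proof (ge_pos t).
  apply Rmult_lt_0_compat; auto. apply Rinv_0_lt_compat; auto. Qed.

Lemma std_cont t : continuous std_normal_pdf t.
Proof. apply exd_cont. unfold std_normal_pdf. auto_derive. pose proof sPI_pos. lra. Qed.

Lemma std_ex a b : ex_RInt std_normal_pdf a b.
Proof. apply exRc. intros; apply std_cont. Qed.

Lemma std_RInt a b : RInt std_normal_pdf a b = g0 b - g0 a.
Proof. unfold g0. rewrite <- (RInt_Chasles_R _ 0 a b) by apply std_ex.
  rewrite <- (opp_RInt_swap (V:=R_CompleteNormedModule)) by apply std_ex.
  unfold opp; simpl. ring. Qed.

Lemma g0_odd x : g0 (- x) = - g0 x.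
Proof.
  unfold g0.
  assert (E := RInt_comp_lin_R std_normal_pdf (-1) 0 0 x (std_ex _ _)).
  replace (-1 * 0 + 0) with 0 in E by ring. replace (-1 * x + 0) with (- x) in E by ring.
  rewrite <- E.
  rewrite (RInt_ext_R _ (fun y => -1 * std_normal_pdf y)).
  2:{ intros y _. unfold std_normal_pdf. replace ((-1*y+0)^2) with (y^2) by ring. reflexivity. }
  rewrite RInt_scal_R by apply std_ex. lra.
Qed.

Lemma g0_0 : g0 0 = 0.
Proof. unfold g0. apply (RInt_point (V:=R_CompleteNormedModule)). Qed.

Lemma g0_lt a b : a < b -> g0 a < g0 b.
Proof.
  intros H. assert (0 < RInt std_normal_pdf a b).
  { apply RInt_gt_0; auto. intros; apply std_pos. intros; apply std_cont. }
  rewrite std_RInt in H0. lra.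
Qed.

Lemma g0_le a b : a <= b -> g0 a <= g0 b.
Proof. intros [H|H]. left; now apply g0_lt. subst; lra. Qed.

Lemma g0_bound x : - (1/2) < g0 x < 1/2.
Proof.
  assert (P : forall y, 0 <= y -> - (1/2) < g0 y < 1/2).
  { intros y Hy. pose proof (tail0 (y+1) ltac:(lra)). pose proof (g0_lt y (y+1) ltac:(lra)).
    pose proof (g0_le 0 y Hy). rewrite g0_0 in *. lra. }
  destruct (Rle_or_lt 0 x) as [H|H]. auto.
  pose proof (P (-x) ltac:(lra)). rewrite g0_odd in H0. lra.
Qed.

Lemma ge_small eps : 0 < eps -> exists M, 0 <= M /\ forall x, M <= x -> ge x < eps.
Proof.
  intros He. exists (Rmax 1 (2 * Rabs (ln eps) + 1)). split.
  { apply Rle_trans with 1; [lra| apply Rmax_l]. }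
  intros x Hx. pose proof (Rmax_l 1 (2 * Rabs (ln eps) + 1)). pose proof (Rmax_r 1 (2 * Rabs (ln eps) + 1)).
  unfold ge. rewrite <- (exp_ln eps He). apply exp_increasing.
  pose proof (Rle_abs (- ln eps)). rewrite Rabs_Ropp in H1.
  assert (x <= x ^ 2) by nra. lra.
Qed.

Lemma Phi_eq x : Phi x = 1/2 + g0 x.
Proof.
  unfold Phi. apply (is_RInt_gen_unique (V:=R_CompleteNormedModule)).
  intros P [eps HP].
  destruct (ge_small eps (cond_pos eps)) as [M [HM0 HM]].
  apply (Filter_prod _ _ _ (fun a => a < - M) (fun b => b = x)).
  - exists (- M). auto.
  - reflexivity.
  - intros a b Ha Hb. simpl. subst b. exists (RInt std_normal_pdf a x). split.
    + apply (RInt_correct (V:=R_CompleteNormedModule)). apply std_ex.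
    + apply HP. rewrite std_RInt. replace (g0 a) with (- g0 (-a)) by (rewrite g0_odd; ring).
      pose proof (tail0 (-a) ltac:(lra)). pose proof (HM (-a) ltac:(lra)).
      change (Rabs ((g0 x - - g0 (- a)) - (1/2 + g0 x)) < eps).
      rewrite Rabs_left1; lra.
Qed.

Lemma tail_fin b d Y : 0 <= b -> 0 <= d -> b <= Y ->
  g0 (Y + d) - g0 (b + d) <= ge d * (g0 Y - g0 b).
Proof.
  intros Hb Hd HY. rewrite <- !std_RInt.
  assert (E := RInt_comp_lin_R std_normal_pdf 1 d b Y (std_ex _ _)).
  replace (1 * b + d) with (b + d) in E by ring. replace (1 * Y + d) with (Y + d) in E by ring.
  rewrite <- E. rewrite <- RInt_scal_R by apply std_ex.
  apply RInt_le; auto.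
  - apply exRc; intros; apply exd_cont. unfold std_normal_pdf; auto_derive. pose proof sPI_pos; lra.
  - apply exRc; intros; apply exd_cont. unfold std_normal_pdf; auto_derive. pose proof sPI_pos; lra.
  - intros s Hs. rewrite !std_ge. pose proof sPI_pos. pose proof (ge_pos s).
    assert (ge (1 * s + d) <= ge d * ge s).
    { unfold ge. rewrite <- exp_plus. apply exp_le'. nra. }
    assert (0 < / sqrt (2 * PI)) by (apply Rinv_0_lt_compat; lra). nra.
Qed.

Lemma tail_ratio b d : 0 <= b -> 0 <= d ->
  1/2 - g0 (b + d) <= ge d * (1/2 - g0 b).
Proof.
  intros Hb Hd. destruct (Rle_or_lt (1/2 - g0 (b + d)) (ge d * (1/2 - g0 b))) as [H|H]; auto.
  exfalso. set (eta := 1/2 - g0 (b + d) - ge d * (1/2 - g0 b)).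
  assert (Heta : 0 < eta) by (unfold eta; lra).
  destruct (ge_small (eta/2) ltac:(lra)) as [M [HM0 HM]].
  set (Y := Rmax M b).
  assert (HYM : M <= Y) by apply Rmax_l. assert (HYb : b <= Y) by apply Rmax_r.
  pose proof (tail_fin b d Y Hb Hd HYb).
  pose proof (tail0 Y ltac:(lra)). pose proof (HM Y HYM).
  pose proof (tail0 (Y + d) ltac:(lra)). pose proof (HM (Y + d) ltac:(lra)).
  pose proof (ge_pos d).
  assert (ge d * (g0 Y - g0 b) <= ge d * (1/2 - g0 b)) by (apply Rmult_le_compat_l; lra).
  unfold eta in *. lra.
Qed.

Theorem theorem2 (c p : R) (hp : 0 < p < 1) (q : R) (hq : Phi q = p)
  (theta : R -> R) (htheta : forall x : R, c < x -> F x (theta x) c = p) :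
  is_lim (fun x : R => theta x - (x - q)) p_infty 0.
Proof.
  apply is_lim_spec. intros eps. simpl.
  assert (Phi_lt : forall u v, u < v -> Phi u < Phi v).
  { intros u v H. rewrite !Phi_eq. pose proof (g0_lt u v H). lra. }
  assert (Phi_b : forall y, 0 < Phi y < 1).
  { intros y. rewrite Phi_eq. pose proof (g0_bound y). lra. }
  pose proof (cond_pos eps) as Heps.
  set (delta := Phi (q + eps) - p).
  assert (Hdelta : 0 < delta) by (unfold delta; rewrite <- hq; pose proof (Phi_lt q (q + eps)); lra).
  destruct (ge_small delta Hdelta) as [MB [HMB0 HMB]].
  destruct (ge_small ((1 - p) / 2) ltac:(lra)) as [MA [HMA0 HMA]].
  destruct (ge_small (1 - p) ltac:(lra)) as [MD [HMD0 HMD]].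
  exists (c + MD + MA + MB + 1).
  intros x Hx.
  set (d := x - c).
  set (A := x - theta x). set (Bv := c - theta x).
  assert (HAB : A = Bv + d) by (unfold A, Bv, d; ring).
  assert (Hd : MD <= d) by (unfold d; lra).
  pose proof (htheta x ltac:(lra)) as Hth. unfold F in Hth. fold A Bv in Hth.
  pose proof (Phi_b A) as [HA1 HA2]. pose proof (Phi_b Bv) as [HB1 HB2].
  assert (Eq : Phi A = p + (1 - p) * Phi Bv).
  { rewrite <- Hth. field. lra. }
  assert (Hq : q <= A).
  { destruct (Rle_or_lt q A) as [H|H]; auto. pose proof (Phi_lt A q H). nra. }
  assert (HBneg : Bv < 0).
  { destruct (Rle_or_lt 0 Bv) as [H|H]; auto. exfalso.
    pose proof (tail_ratio Bv d H ltac:(lra)) as T. rewrite <- HAB in T.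
    rewrite !Phi_eq in Eq. pose proof (HMD d Hd). pose proof (g0_bound Bv).
    assert (ge d * (1/2 - g0 Bv) < (1 - p) * (1/2 - g0 Bv)) by (apply Rmult_lt_compat_r; lra).
    nra. }
  assert (HAM : A < MA).
  { destruct (Rle_or_lt MA A) as [H|H]; auto. exfalso.
    pose proof (HMA A H). pose proof (tail0 A ltac:(lra)).
    pose proof (Phi_lt Bv 0 HBneg). rewrite (Phi_eq 0), g0_0 in H2.
    rewrite Phi_eq in Eq. nra. }
  assert (HBs : Phi Bv < delta).
  { assert (Hdx : d = x - c) by reflexivity. assert (Bv <= - MB) by lra.
    rewrite Phi_eq. replace Bv with (- (- Bv)) by ring. rewrite g0_odd.
    pose proof (tail0 (- Bv) ltac:(lra)). pose proof (HMB (- Bv) ltac:(lra)). lra. }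
  assert (HAe : A < q + eps).
  { destruct (Rle_or_lt (q + eps) A) as [H|H]; auto. exfalso.
    assert (Phi (q + eps) <= Phi A).
    { destruct H as [H|H]. left; now apply Phi_lt. subst; rewrite H; lra. }
    unfold delta in HBs. nra. }
  unfold A in *. rewrite Rabs_left1; lra.
Qed.
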